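(* Let $T$ be an iso-unique zero forcing tree with at least two vertices and let $\mathcal{P}$ be a minimum path cover of $T$. If a path $P\in\mathcal{P}$ consists of a single vertex $x$, then $x$ has a unique neighbor, and this neighbor is the middle vertex of a path $R\in\mathcal{P}$ with exactly three vertices (i.e., $R\cong P_3$).
   Context: Zero forcing: in a graph $G$, starting with an initial set $S\subseteq V(G)$ of active vertices, repeatedly apply the rule: if an active vertex $u$ has exactly one non-active neighbor $v$, then $v$ becomes active. $S$ is a zero forcing set if eventually all vertices become active; a minimum zero forcing set is one of minimum size. A graph is an iso-unique zero forcing graph if for every two minimum zero forcing sets $A,B$ there is an automorphism $\phi$ with $\phi(A)=B$. A path cover of a tree $T$ is a set of vertex-disjoint paths of $T$ (a single vertex counts as a path) covering all vertices of $T$; it is minimum if no path cover has fewer paths. *)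

(* Defs.v *)
From mathcomp Require Import all_boot all_order.
From mathcomp Require Import fingroup perm.
Set Implicit Arguments. Unset Strict Implicit. Unset Printing Implicit Defensive.

Section ZF.
Variables (V : finType) (e : rel V).

Definition simple_graph := symmetric e /\ irreflexive e.

Definition is_tree :=
  (forall x y, connect e x y) /\
  (forall s : seq V, uniq s -> path.cycle e s -> size s < 3).

(* one round of zero forcing: every active u with exactly one non-active
   neighbour v makes v active (all applicable forces performed at once) *)
Definition zf_step (S : {set V}) : {set V} :=
  S :|: [set v | [exists u, (u \in S) && ([set w | e u w & w \notin S] == [set v])]].

(* the final set of active vertices (reached after at most #|V| rounds) *)
Definition zf_closure (S : {set V}) : {set V} := iter #|V| zf_step S.

Definition zero_forcing_set (S : {set V}) := zf_closure S = [set: V].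

Definition min_zero_forcing_set (S : {set V}) :=
  zero_forcing_set S /\ forall S' : {set V}, zero_forcing_set S' -> #|S| <= #|S'|.

Definition graph_automorphism (phi : {perm V}) := forall x y, e (phi x) (phi y) = e x y.

Definition iso_unique_zf :=
  forall A B : {set V}, min_zero_forcing_set A -> min_zero_forcing_set B ->
    exists phi : {perm V}, graph_automorphism phi /\ phi @: A = B.

Definition path_vertex_set (A : {set V}) :=
  exists (x : V) (s : seq V), [/\ uniq (x :: s), path e x s & A = [set y in x :: s]].

Definition path_cover (P : {set {set V}}) :=
  partition P [set: V] /\ forall A, A \in P -> path_vertex_set A.

Definition min_path_cover (P : {set {set V}}) :=
  path_cover P /\ forall P' : {set {set V}}, path_cover P' -> #|P| <= #|P'|.

End ZF.

(* Main.v *)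
Require Import Defs.
From mathcomp Require Import all_boot all_order.
From mathcomp Require Import fingroup perm.
Set Implicit Arguments. Unset Strict Implicit. Unset Printing Implicit Defensive.

Section Aux.
Variables (V : finType) (e : rel V).
Hypothesis esymm : symmetric e.
Hypothesis eirr : irreflexive e.
Hypothesis acyc : forall s : seq V, uniq s -> path.cycle e s -> size s < 3.

Definition avoid (a : V) : rel V := [rel x y | [&& e x y, x != a & y != a]].
Definition br (a b : V) : {set V} := [set v | connect (avoid a) b v].
Definition deg (v : V) := #|[set w | e v w]|.

Lemma avoid_sym a : symmetric (avoid a).
Proof. by move=> x y; rewrite /avoid /= esymm; case: (e y x); rewrite //= andbC. Qed.

Lemma avoid_csym a : connect_sym (avoid a).
Proof. exact: sym_connect_sym (avoid_sym a). Qed.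

Lemma avoidE a x y : e x y -> x != a -> y != a -> avoid a x y.
Proof. by move=> *; apply/and3P. Qed.

Lemma avoid_sub a : subrel (avoid a) e.
Proof. by move=> x y /and3P[]. Qed.

Lemma avoid_path_notin a x p : path (avoid a) x p -> a \notin p.
Proof.
elim: p x => //= y p IH x /andP[/and3P[_ _ ya] /IH].
by rewrite inE negb_or eq_sym ya.
Qed.

Lemma neq_of_e x y : e x y -> x != y.
Proof. by apply: contraTneq => ->; rewrite eirr. Qed.

Lemma tree_sep v u w : e v u -> e v w -> u != w -> connect (avoid v) u w -> False.
Proof.
move=> evu evw neq /connectP [p pth lst].
move: lst; case/shortenP: pth => p' pth' uq' _ lst.
have hsz := acyc (s := v :: u :: p').
have : size (v :: u :: p') < 3.
  apply: hsz.
    rewrite cons_uniq uq' andbT inE negb_or (neq_of_e evu) /=.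
    exact: avoid_path_notin pth'.
  rewrite /= evu rcons_path (sub_path (@avoid_sub v) pth') -lst esymm evw.
  done.
case: p' pth' uq' lst {hsz} => [|z p'] //= _ _ lst.
by move: neq; rewrite lst eqxx.
Qed.

Lemma chain_conn a c u w : sorted e c -> a \notin c -> u \in c -> w \in c ->
  connect (avoid a) u w.
Proof.
case: c => [|x s] // srt ac uc wc.
have pa : path (avoid a) x s.
  apply: (sub_in_path (P := predC1 a) (e := e)) => //.
    move=> y z /= ya za eyz; exact: avoidE.
  by apply/allP => y yc /=; apply: contraNneq ac => <-.
have h := path_connect pa.
apply: (connect_trans (y := x)); last exact: h.
by rewrite avoid_csym; apply: h.
Qed.

Lemma br_notin a b : b != a -> a \notin br a b.
Proof.
move=> ba; rewrite inE; apply/negP => /(closed_connect (a := predC1 a)) h.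
have : (b \in predC1 a) = (a \in predC1 a) by apply: h => x y /and3P[_ xa ya]; rewrite !inE xa ya.
by rewrite !inE ba eqxx.
Qed.

Lemma br_self a b : b \in br a b.
Proof. by rewrite inE connect0. Qed.

Lemma br_sub a b a' b' : b' \in br a b -> a \notin br a' b' -> br a' b' \subset br a b.
Proof.
rewrite !inE => bb' nab; apply/subsetP => w; rewrite !inE => /connectP [p pth ->].
have hc := path_connect pth.
have allp : all (predC1 a) (b' :: p).
  apply/allP => y yp /=; apply: contraNneq nab => <-; exact: hc.
have pa : path (avoid a) b' p.
  apply: (sub_in_path (P := predC1 a) (e := avoid a')) => //.
  move=> y z /= ya za /and3P[eyz _ _]; exact: avoidE.
apply: connect_trans bb' _; apply/connectP; by exists p.
Qed.

Lemma conn_step a u v w : connect (avoid a) u v -> e v w -> v != a -> w != a ->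
  connect (avoid a) u w.
Proof.
move=> c evw va wa; apply: connect_trans c _; apply: connect1; exact: avoidE.
Qed.


Definition chainp (c : seq V) := [&& c != [::], sorted e c & uniq c].
Definition coverp (cs : seq (seq V)) :=
  all chainp cs /\ forall v, count (fun c : seq V => v \in c) cs = 1.

Lemma sorted_e_rev c : sorted e (rev c) = sorted e c.
Proof. rewrite rev_sorted; apply: eq_sorted => x y /=; exact: esymm. Qed.

Lemma chainp_rev c : chainp c -> chainp (rev c).
Proof.
case/and3P => ne s u; apply/and3P; split.
- by case: c ne {s u} => // x s _; rewrite rev_cons; case: (rev s).
- by rewrite sorted_e_rev.
- by rewrite rev_uniq.
Qed.

Lemma sorted_mid pre a b post : sorted e (pre ++ a :: b :: post) -> e a b.
Proof.
elim: pre => [|x pre IH] /=; first by case/andP.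
by move/path_sorted.
Qed.

Lemma cover_perm cs cs' : perm_eq cs cs' -> coverp cs -> coverp cs'.
Proof.
move=> pe [ha hc]; split; first by rewrite -(perm_all _ pe).
move=> v; rewrite -(hc v); symmetry; by move/seq.permP: pe; apply.
Qed.

Lemma cover_has cs v : coverp cs -> exists2 c, c \in cs & v \in c.
Proof.
case=> _ /(_ v) h; have : has (fun c : seq V => v \in c) cs by rewrite has_count h.
by case/hasP => c; exists c.
Qed.

Lemma count2 (T : eqType) (p : pred T) (s : seq T) a b :
  a \in s -> b \in s -> a != b -> p a -> p b -> 2 <= count p s.
Proof.
move=> ha hb ab pa pb; have /seq.permP -> := perm_to_rem ha; rewrite /= pa.
have : b \in rem a s by apply: rem_mem => //; rewrite eq_sym.
move=> hr; have : has p (rem a s) by apply/hasP; exists b.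
by rewrite has_count; case: count.
Qed.

Lemma cover_same cs c1 c2 v : coverp cs -> c1 \in cs -> c2 \in cs -> v \in c1 -> v \in c2 ->
  c1 = c2.
Proof.
move=> [_ hc] h1 h2 v1 v2; apply/eqP/negPn/negP => ne.
have := count2 (p := fun c : seq V => v \in c) h1 h2 ne v1 v2.
by rewrite hc.
Qed.

Lemma front1 (T : eqType) (cs : seq T) Q : Q \in cs -> exists rest, perm_eq cs (Q :: rest).
Proof. by move=> h; exists (rem Q cs); exact: perm_to_rem. Qed.

Lemma front2 (T : eqType) (cs : seq T) Q R : Q \in cs -> R \in cs -> R != Q ->
  exists rest, perm_eq cs (Q :: R :: rest).
Proof.
move=> hQ hR ne; have hR' : R \in rem Q cs by apply: rem_mem.
exists (rem R (rem Q cs)).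
apply: perm_trans (perm_to_rem hQ) _; rewrite perm_cons; exact: perm_to_rem.
Qed.

Lemma cover_disj A B rest v : coverp (A :: B :: rest) -> (v \in A) -> (v \in B) -> False.
Proof.
case=> _ /(_ v) /=; case: (v \in A) => //=; case: (v \in B) => //=.
Qed.

Lemma cover_repl2 A B A' B' rest : coverp (A :: B :: rest) -> chainp A' -> chainp B' ->
  (forall v, (v \in A') + (v \in B') = (v \in A) + (v \in B)) ->
  coverp (A' :: B' :: rest).
Proof.
case=> /= /and3P[_ _ ha] hc cA cB hv; split; first by rewrite /= cA cB.
by move=> v; rewrite /= addnA hv -addnA; exact: hc.
Qed.

Lemma cover_repl1 A A' rest : coverp (A :: rest) -> chainp A' -> A' =i A ->
  coverp (A' :: rest).
Proof.
case=> /= /andP[_ ha] hc cA hv; split; first by rewrite /= cA.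
by move=> v; rewrite /= hv; exact: hc.
Qed.

Lemma cover_merge A B A' rest : coverp (A :: B :: rest) -> chainp A' ->
  (forall v, (v \in A') = (v \in A) + (v \in B) :> nat) ->
  coverp (A' :: rest).
Proof.
case=> /= /and3P[_ _ ha] hc cA hv; split; first by rewrite /= cA.
by move=> v; rewrite /= hv -addnA; exact: hc.
Qed.

Lemma cover_rev A rest : coverp (A :: rest) -> coverp (rev A :: rest).
Proof.
move=> h; have [/= /andP[cA _] _] := h.
apply: (cover_repl1 h); first exact: chainp_rev.
by move=> v; rewrite mem_rev.
Qed.


Lemma sorted_catr s1 s2 : sorted e (s1 ++ s2) -> sorted e s2.
Proof. by elim: s1 => //= x s1 IH /path_sorted /IH. Qed.

Lemma sorted_catl s1 s2 : sorted e (s1 ++ s2) -> sorted e s1.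
Proof. by case: s1 => //= x s1; rewrite cat_path => /andP[]. Qed.

Lemma cover_to_pc cs : coverp cs ->
  exists Pc : {set {set V}}, path_cover e Pc /\ #|Pc| <= size cs.
Proof.
move=> hcov; have [hall hc] := hcov.
exists [set A in map (fun c => [set v in c]) cs]; split; last first.
  by rewrite cardsE; apply: leq_trans (card_size _) _; rewrite size_map.
split.
  apply/and3P; split.
  - apply/eqP/setP => v; rewrite in_setT; apply/bigcupP.
    have [c hc1 hc2] := cover_has v hcov.
    exists [set w in c]; first by rewrite inE; apply: map_f.
    by rewrite inE.
  - apply/trivIsetP => A B; rewrite !inE => /mapP[c1 h1 ->] /mapP[c2 h2 ->] ne.
    rewrite -setI_eq0; apply/eqP/setP => v; rewrite !inE.
    apply/negbTE/negP => /andP[v1 v2].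
    by move: ne; rewrite (cover_same hcov h1 h2 v1 v2) eqxx.
  - apply/negP; rewrite inE => /mapP[c h /setP E].
    have := allP hall c h; case: c {h} E => // x s E _.
    by have := E x; rewrite !inE eqxx.
move=> A; rewrite inE => /mapP[c h ->].
have := allP hall c h; case: c {h} => // x s /and3P[_ srt uq].
by exists x, s; split.
Qed.

Lemma min_cover_le P cs : min_path_cover e P -> coverp cs -> #|P| <= size cs.
Proof.
move=> [_ hmin] hc; have [Pc [hPc hsz]] := cover_to_pc hc.
exact: leq_trans (hmin _ hPc) hsz.
Qed.

Lemma pc_to_cover P : path_cover e P ->
  exists cs, [/\ coverp cs, size cs = #|P| & forall c, c \in cs -> [set v in c] \in P].
Proof.
move=> [hpart hpv].
have hl : forall L : seq {set V}, {subset L <= P} ->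
    exists cs, map (fun c => [set v in c]) cs = L /\ all chainp cs.
  elim=> [|A L IH] hsub; first by exists [::].
  have [|cs [h1 h2]] := IH; first by move=> B hB; apply: hsub; rewrite inE hB orbT.
  have [x [s [uq pth hA]]] := hpv A (hsub A (mem_head _ _)).
  exists ((x :: s) :: cs); split; first by rewrite /= h1 hA.
  by rewrite /= h2 andbT; apply/and3P; split.
have [cs [hmap hall]] : exists cs, map (fun c => [set v in c]) cs = enum P /\ all chainp cs.
  by apply: hl => A; rewrite mem_enum.
case/and3P: hpart => /eqP hcovP htriv h0.
exists cs; split.
- split => // v.
  have -> : count (fun c : seq V => v \in c) cs = count (fun A : {set V} => v \in A) (enum P).
    by rewrite -hmap count_map; apply: eq_count => c /=; rewrite inE.
  have vc : v \in cover P by rewrite hcovP in_setT.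
  rewrite (@eq_in_count _ _ (pred1 (pblock P v))); last first.
    move=> A; rewrite mem_enum => hA /=; apply/idP/eqP.
      by move=> vA; rewrite (def_pblock htriv hA vA).
    by move=> ->; rewrite mem_pblock.
  by rewrite count_uniq_mem ?enum_uniq // mem_enum pblock_mem.
- by rewrite cardE -hmap size_map.
- by move=> c hc; rewrite -(mem_enum P) -hmap; apply: map_f.
Qed.

Lemma chain_single c x : chainp c -> [set v in c] = [set x] -> c = [:: x].
Proof.
case: c => // a s /and3P[_ _ uq] /setP E.
have ha : a = x by have := E a; rewrite !inE eqxx => /esym/eqP.
case: s uq E => [|b s] uq E; first by rewrite ha.
have hb : b = x by have := E b; rewrite !inE eqxx orbT => /esym/eqP.
by move: uq; rewrite /= inE ha hb eqxx.
Qed.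


Definition stalled (C : {set V}) :=
  forall u, u \in C -> forall v, [set w | e u w & w \notin C] != [set v].

Lemma step_sub (X : {set V}) : X \subset zf_step e X.
Proof. exact: subsetUl. Qed.

Lemma iter_fix_or S i : zf_step e (iter i (zf_step e) S) = iter i (zf_step e) S \/
  i <= #|iter i (zf_step e) S|.
Proof.
elim: i => [|i IH]; first by right.
case: IH => [h|h]; first by left; rewrite /= h h.
have [h2|h2] := eqVneq (zf_step e (iter i (zf_step e) S)) (iter i (zf_step e) S).
  by left; rewrite /= h2 h2.
right; rewrite /=.
have hp : iter i (zf_step e) S \proper zf_step e (iter i (zf_step e) S).
  by rewrite properEneq eq_sym h2 step_sub.
exact: leq_ltn_trans h (proper_card hp).
Qed.

Lemma closure_fix S : zf_step e (zf_closure e S) = zf_closure e S.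
Proof.
rewrite /zf_closure; case: (iter_fix_or S #|V|) => // h.
have -> : iter #|V| (zf_step e) S = setT.
  by apply/eqP; rewrite eqEcard subsetT cardsT.
by apply/eqP; rewrite eqEsubset subsetT step_sub.
Qed.

Lemma fix_stalled (X : {set V}) : X = zf_step e X -> stalled X.
Proof.
move=> h u uX v; apply/negP => /eqP E.
have vX : v \in X.
  rewrite h /zf_step in_setU; apply/orP; right; rewrite inE.
  by apply/existsP; exists u; rewrite uX E eqxx.
have : v \in [set w | e u w & w \notin X] by rewrite E set11.
by rewrite inE vX andbF.
Qed.

Lemma closure_sup (S : {set V}) : S \subset zf_closure e S.
Proof.
rewrite /zf_closure; elim: #|V| => [|n IH] //=.
exact: subset_trans IH (step_sub _).
Qed.

Lemma first_inactive (C : {set V}) a s v : a \in C -> v \in a :: s -> v \notin C ->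
  exists pre p f post, [/\ a :: s = pre ++ p :: f :: post, p \in C, f \notin C &
    all (fun y => y \in C) pre].
Proof.
elim: s a => [|b s IH] a aC.
  by rewrite inE => /eqP ->; rewrite aC.
move=> vin vC.
case bC: (b \in C); last by exists [::], a, b, s; rewrite bC.
have vin' : v \in b :: s.
  by move: vin; rewrite inE => /orP[/eqP E|//]; move: vC; rewrite E aC.
have [pre [p [f [post [E pC fC apre]]]]] := IH b bC vin' vC.
by exists (a :: pre), p, f, post; split => //; [rewrite E | rewrite /= aC apre].
Qed.

Lemma core_zf C a s v : stalled C -> sorted e (a :: s) -> uniq (a :: s) -> a \in C ->
  v \in a :: s -> v \notin C ->
  exists pre p f post w, [/\ a :: s = pre ++ p :: f :: post, p \in C, f \notin C,
     all (fun y => y \in C) pre &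
     [/\ e p f, e p w, w \notin C, w != f & w \notin a :: s]].
Proof.
move=> st srt uq aC vin vC.
have [pre [p [f [post [E pC fC apre]]]]] := first_inactive aC vin vC.
rewrite E in srt uq.
have epf := sorted_mid srt.
have [w hw] : exists w, [&& e p w, w \notin C & w != f].
  case: (pickP [pred w | [&& e p w, w \notin C & w != f]]) => [w hw|hn]; first by exists w.
  case/negP: (st p pC f); apply/eqP/setP => w.
  rewrite !inE; apply/andP/eqP => [[ew wC]|->]; last by rewrite epf fC.
  by have := hn w; rewrite /= ew wC /= => /negbFE/eqP.
case/and3P: hw => epw wC wf.
exists pre, p, f, post, w; split => //; split => //.
rewrite E mem_cat negb_or; apply/andP; split.
  by apply/negP => wpre; move/allP: apre => /(_ w wpre); rewrite (negbTE wC).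
rewrite inE negb_or; apply/andP; split.
  by apply: contraNneq wC => ->.
rewrite inE (negbTE wf) /=; apply/negP => wpost.
move: uq; rewrite cat_uniq => /and3P[_ _ /= /andP[pnot _]].
have sfp : sorted e (f :: post) by move/sorted_catr: srt => /path_sorted.
apply: (tree_sep epf epw); first by rewrite eq_sym.
apply: chain_conn sfp pnot (mem_head _ _) _.
by rewrite inE wpost orbT.
Qed.


Variable x0 : V.

Lemma card_lt_sub (A B : {set V}) x : A \subset B -> x \in B -> x \notin A -> #|A| < #|B|.
Proof.
move=> sAB xB xA; rewrite (cardsD1 x B) xB add1n ltnS; apply: subset_leq_card.
by apply/subsetP => y yA; rewrite !inE (subsetP sAB _ yA) andbT; apply: contraNneq xA => <-.
Qed.

Lemma zf_desc C cs : coverp cs -> stalled C -> (forall c, c \in cs -> head x0 c \in C) ->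
  forall n p w, #|br p w| <= n -> p \in C -> w \notin C -> e p w ->
  (exists2 c, c \in cs & (p \in c) && (w \notin c)) -> False.
Proof.
move=> hcov st hh; elim=> [|n IH] p w hn pC wC epw [c hc /andP[pc wc]].
  have : 0 < #|br p w| by apply/card_gt0P; exists w; exact: br_self.
  by rewrite lt0n -leqn0 hn.
have [c' hc' wc'] := cover_has w hcov.
case: c' hc' wc' => [//|a s] hc' wc'.
have /and3P[_ srt uq] := allP hcov.1 _ hc'.
have aC : a \in C by have := hh _ hc'.
have [pre [p' [f [post [w' [E p'C fC apre [ep'f ep'w' w'C w'f w'c]]]]]]] :=
  core_zf st srt uq aC wc' wC.
have pnc' : p \notin a :: s.
  apply/negP => pin; have E2 := cover_same hcov hc hc' pc pin.
  by move: wc; rewrite E2 wc'.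
have p'in : p' \in a :: s by rewrite E mem_cat inE eqxx orbT.
have wpost : w \in f :: post.
  move: wc'; rewrite E mem_cat => /orP[wpre|].
    by move/allP: apre => /(_ w wpre); rewrite (negbTE wC).
  rewrite inE => /orP[/eqP wp|//]; by move: wC; rewrite wp p'C.
have uq' := uq; rewrite E cat_uniq in uq'; case/and3P: uq' => _ _ /= /andP[p'not _].
have sfp : sorted e (f :: post).
  by move: srt; rewrite E => /sorted_catr /path_sorted.
have pp' : p != p' by apply: contraNneq pnc' => ->.
have w'p : w' != p by apply: contraNneq w'C => ->.
have wp' : w != p' by apply: contraNneq wC => ->.
have hc1 : p' \in br p w by rewrite inE; exact: chain_conn srt pnc' wc' p'in.
have hd : p \notin br p' w'.
  apply/negP; rewrite inE => h.
  have : connect (avoid p') w' f.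
    apply: (connect_trans (y := w)).
      by apply: conn_step h epw pp' wp'.
    exact: chain_conn sfp p'not wpost (mem_head _ _).
  by apply: (tree_sep ep'w' ep'f w'f).
have he : w' \in br p w.
  rewrite inE; apply: conn_step _ ep'w' _ w'p; first by rewrite inE in hc1.
  by rewrite eq_sym.
have hsub := br_sub he hd.
have hlt : #|br p' w'| < #|br p w|.
  apply: card_lt_sub hsub hc1 _; apply: br_notin.
  by rewrite eq_sym; exact: neq_of_e ep'w'.
apply: (IH p' w') => //; first by rewrite -ltnS; exact: leq_trans hlt hn.
by exists (a :: s) => //; rewrite p'in w'c.
Qed.

Lemma heads_zf cs : coverp cs -> zero_forcing_set e [set v in map (head x0) cs].
Proof.
move=> hcov; set H := [set v in map (head x0) cs]; set C := zf_closure e H.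
have st : stalled C by apply: fix_stalled; rewrite closure_fix.
have hh : forall c, c \in cs -> head x0 c \in C.
  move=> c hc; apply: (subsetP (closure_sup H)); rewrite inE; exact: map_f.
rewrite /zero_forcing_set -/C; apply/setP => v; rewrite in_setT; apply/negPn/negP => vC.
have [c hc vc] := cover_has v hcov.
case: c hc vc => [//|a s] hc vc.
have /and3P[_ srt uq] := allP hcov.1 _ hc.
have aC : a \in C by have := hh _ hc.
have [pre [p [f [post [w [E pC fC _ [_ epw wC _ wc]]]]]]] := core_zf st srt uq aC vc vC.
apply: (zf_desc hcov st hh (leqnn _) pC wC epw); exists (a :: s) => //.
by rewrite E mem_cat inE eqxx orbT /= -E wc.
Qed.


Definition Inv (n : nat) (X : {set V}) (cs : seq (seq V)) :=
  [/\ all chainp cs, forall v, count (fun c : seq V => v \in c) cs = (v \in X),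
      size cs = n &
      forall c, c \in cs -> forall z, z \in c -> z != last x0 c -> forall w, e z w -> w \in X].

Lemma inv_init (S : {set V}) : Inv #|S| S (map (fun s => [:: s]) (enum S)).
Proof.
split.
- by apply/allP => c /mapP[s _ ->].
- move=> v; rewrite count_map.
  rewrite (@eq_count _ _ (pred1 v)); last by move=> s /=; rewrite inE eq_sym.
  by rewrite count_uniq_mem ?enum_uniq // mem_enum.
- by rewrite size_map cardE.
- move=> c /mapP[s _ ->] z; rewrite inE => /eqP -> /=; by rewrite eqxx.
Qed.

Lemma inv_force n X cs u v : Inv n X cs -> u \in X -> v \notin X -> e u v ->
  (forall w, e u w -> w \notin X -> w = v) ->
  Inv n (v |: X) (map (fun c => if u \in c then rcons c v else c) cs).
Proof.
move=> [hall hcnt hsz hnl] uX vX euv hf.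
have vnot : forall c, c \in cs -> v \notin c.
  move=> c hc; apply/negP => vc.
  have : 0 < count (fun c : seq V => v \in c) cs by rewrite -has_count; apply/hasP; exists c.
  by rewrite hcnt (negbTE vX).
have ulast : forall c, c \in cs -> u \in c -> u = last x0 c.
  move=> c hc uc; apply/eqP; apply/negPn/negP => ne.
  by have := hnl c hc u uc ne v euv; rewrite (negbTE vX).
split.
- apply/allP => c' /mapP[c hc ->]; have := allP hall c hc.
  case uc: (u \in c) => //.
  have ul := ulast c hc uc.
  case: c hc uc ul => // a s hc uc ul /and3P[_ srt uq].
  apply/and3P; split.
  + by rewrite rcons_cons.
  + by move: ul => /= ul; rewrite rcons_path -ul euv andbT.
  + by rewrite rcons_uniq uq andbT; apply: vnot.
- move=> w; rewrite count_map in_setU1.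
  have [->|wv] := eqVneq w v.
    rewrite /=; transitivity (count (fun c : seq V => u \in c) cs); last by rewrite hcnt uX.
    apply: eq_in_count => c hc /=.
    case: (u \in c) => /=; last by apply/negbTE/vnot.
    by rewrite mem_rcons inE eqxx.
  rewrite /= -hcnt; apply: eq_count => c /=.
  by case: (u \in c) => //; rewrite mem_rcons inE (negbTE wv).
- by rewrite size_map.
- move=> c' /mapP[c hc ->] z.
  case uc: (u \in c); last first.
    by move=> zc zl w ezw; rewrite in_setU1 (hnl c hc z zc zl w ezw) orbT.
  rewrite mem_rcons inE last_rcons => /orP[/eqP -> |zc zv w ezw]; first by rewrite eqxx.
  have [zu|zu] := eqVneq z u.
    rewrite in_setU1; case wX: (w \in X); first by rewrite orbT.
    by rewrite (hf w) ?eqxx // -?zu // wX.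
  by rewrite in_setU1 (hnl c hc z zc _ w ezw) ?orbT // -(ulast c hc uc).
Qed.

Lemma inv_step n X cs : Inv n X cs -> exists cs', Inv n (zf_step e X) cs'.
Proof.
move=> hinv.
suff : forall k (Y : {set V}) cs, #|zf_step e X :\: Y| <= k -> X \subset Y ->
    Y \subset zf_step e X -> Inv n Y cs -> exists cs', Inv n (zf_step e X) cs'.
  by move/(_ _ X cs (leqnn _) (subxx _) (step_sub _) hinv).
elim=> [|k IH] Y cs' hk sXY sYS hY.
  have -> : zf_step e X = Y.
    apply/eqP; rewrite eqEsubset sYS andbT; apply/subsetP => v vS.
    apply/negPn/negP => vY.
    have : 0 < #|zf_step e X :\: Y| by apply/card_gt0P; exists v; rewrite inE vY.
    by rewrite lt0n -leqn0 hk.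
  by exists cs'.
have [hYS|hYS] := eqVneq Y (zf_step e X); first by rewrite -hYS; exists cs'.
have [v] : exists v, (v \in zf_step e X) && (v \notin Y).
  case: (pickP [pred v | (v \in zf_step e X) && (v \notin Y)]) => [v hv|hn]; first by exists v.
  by case/negP: hYS; rewrite eqEsubset sYS /=; apply/subsetP => v vS; have := hn v; rewrite /= vS => /negbFE.
case/andP => vS vY.
have vX : v \notin X by apply: contra vY; exact: (subsetP sXY).
move: vS; rewrite /zf_step in_setU (negbTE vX) /=.
rewrite inE; case/existsP => u /andP[uX /eqP E].
have euv : e u v.
  have : v \in [set w | e u w & w \notin X] by rewrite E set11.
  by rewrite inE => /andP[].
have hf : forall w, e u w -> w \notin Y -> w = v.
  move=> w euw wY; have : w \in [set w | e u w & w \notin X].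
    by rewrite inE euw /=; apply: contra wY; exact: (subsetP sXY).
  by rewrite E inE => /eqP.
have := inv_force hY (subsetP sXY _ uX) vY euv hf.
apply: IH.
- rewrite -ltnS; apply: leq_trans hk.
  apply: (@card_lt_sub _ _ v).
  + by apply/subsetP => y; rewrite !in_setD in_setU1 negb_or => /andP[/andP[_ ->] ->].
  + rewrite in_setD vY /zf_step in_setU (negbTE vX) /= inE.
    by apply/existsP; exists u; rewrite uX E eqxx.
  + by rewrite in_setD in_setU1 eqxx.
- by apply: subset_trans sXY _; apply/subsetP => y yY; rewrite in_setU1 yY orbT.
- apply/subsetP => y; rewrite in_setU1 => /orP[/eqP ->|]; last exact: (subsetP sYS).
  by rewrite /zf_step in_setU (negbTE vX) /= inE; apply/existsP; exists u; rewrite uX E eqxx.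
Qed.

Lemma zf_lower (S : {set V}) : zero_forcing_set e S -> exists cs, coverp cs /\ size cs = #|S|.
Proof.
rewrite /zero_forcing_set /zf_closure => hz.
have : forall i, exists cs, Inv #|S| (iter i (zf_step e) S) cs.
  elim=> [|i [cs hi]]; first by exists (map (fun s => [:: s]) (enum S)); exact: inv_init.
  exact: inv_step hi.
case/(_ #|V|) => cs; rewrite hz => -[h1 h2 h3 _].
by exists cs; split => //; split => // v; rewrite h2 in_setT.
Qed.


Lemma deg_auto (phi : {perm V}) v : graph_automorphism e phi -> deg (phi v) = deg v.
Proof.
move=> hphi; rewrite /deg.
have -> : [set w | e (phi v) w] = phi @: [set w | e v w].
  apply/setP => w; rewrite inE -{1}(permKV phi w) hphi; apply/idP/imsetP.
    by move=> h; exists ((phi^-1)%g w); rewrite ?inE ?permKV.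
  by move=> [w' hw' ->]; rewrite permK; rewrite inE in hw'.
by rewrite card_imset //; exact: perm_inj.
Qed.

Variable P : {set {set V}}.
Hypothesis hminP : min_path_cover e P.
Hypothesis hiso : iso_unique_zf e.

Definition mincov cs := coverp cs /\ size cs = #|P|.

Lemma heads_card_le cs : #|[set v in map (head x0) cs]| <= size cs.
Proof. by rewrite cardsE; apply: leq_trans (card_size _) _; rewrite size_map. Qed.

Lemma zf_ge (S : {set V}) : zero_forcing_set e S -> #|P| <= #|S|.
Proof.
case/zf_lower => cs [hc hs]; rewrite -hs; exact: min_cover_le hminP hc.
Qed.

Lemma min_heads cs : mincov cs ->
  min_zero_forcing_set e [set v in map (head x0) cs] /\
  #|[set v in map (head x0) cs]| = size cs.
Proof.
move=> [hc hs]; have hz := heads_zf hc.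
have hle := heads_card_le cs.
split; first by split => // S' hS'; apply: leq_trans hle _; rewrite hs; exact: zf_ge.
by apply/eqP; rewrite eqn_leq hle hs zf_ge.
Qed.

Lemma deg_eq c1 r1 c2 r2 : mincov (c1 :: r1) -> mincov (c2 :: r2) ->
  map (head x0) r1 = map (head x0) r2 -> deg (head x0 c1) = deg (head x0 c2).
Proof.
move=> h1 h2 hr.
have [m1 s1] := min_heads h1; have [m2 s2] := min_heads h2.
set D := [set v in map (head x0) r1].
have hD : #|D| <= size r1 by exact: heads_card_le.
have eH : forall c r, map (head x0) r = map (head x0) r1 ->
    [set v in map (head x0) (c :: r)] = head x0 c |: D.
  by move=> c r hrr; apply/setP => v; rewrite /= !inE hrr.
have nD : forall c r, map (head x0) r = map (head x0) r1 ->
    #|[set v in map (head x0) (c :: r)]| = size (c :: r) -> head x0 c \notin D.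
  move=> c r hrr hs; apply/negP => hin; move: hs; rewrite eH // (setUidPr _); last first.
    by rewrite sub1set.
  move=> hs; move: hD; rewrite hs /= -(size_map (head x0) r) hrr size_map.
  by rewrite ltnn.
have n1 := nD c1 r1 erefl s1; have n2 := nD c2 r2 (esym hr) s2.
have [phi [hphi himg]] := hiso m1 m2.
have : \sum_(v in [set v in map (head x0) (c2 :: r2)]) deg v =
       \sum_(v in [set v in map (head x0) (c1 :: r1)]) deg v.
  rewrite -himg big_imset /=; last by move=> a b _ _; exact: perm_inj.
  by apply: eq_bigr => v _; exact: deg_auto.
rewrite (eH c1 r1 erefl) (eH c2 r2 (esym hr)) !big_setU1 //=.
by move/addIn.
Qed.


Lemma mincov_perm cs cs' : perm_eq cs cs' -> mincov cs -> mincov cs'.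
Proof. by move=> pe [hc hs]; split; [exact: cover_perm pe hc | rewrite -(perm_size pe)]. Qed.

Lemma head_rev s : head x0 (rev s) = last x0 s.
Proof. by case/lastP: s => // s y; rewrite rev_rcons last_rcons. Qed.

Lemma last_rev s : last x0 (rev s) = head x0 s.
Proof. by rewrite -{2}(revK s) head_rev. Qed.

Lemma cover_rev2 A B rest : coverp (A :: B :: rest) -> coverp (A :: rev B :: rest).
Proof.
move=> h; have [/= /and3P[cA cB _] _] := h.
apply: (cover_repl2 h) => //; first exact: chainp_rev.
by move=> v; rewrite mem_rev.
Qed.

Lemma chainp_cat A B : chainp A -> chainp B -> e (last x0 A) (head x0 B) ->
  (forall v, v \in A -> v \in B -> False) -> chainp (A ++ B).
Proof.
case: A => // a s; case: B => // b t /and3P[_ sA uA] /and3P[_ sB uB] /= eab hd.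
apply/and3P; split => //.
  by rewrite /= cat_path; apply/andP; split => //=; apply/andP; split.
suff : uniq ((a :: s) ++ (b :: t)) by [].
rewrite cat_uniq uA uB andbT; apply/hasP => -[v vB vA]; exact: hd vA vB.
Qed.

Lemma merge_contra A B rest : mincov (A :: B :: rest) -> e (last x0 A) (head x0 B) -> False.
Proof.
move=> [hc hs] eab.
have [/= /and3P[cA cB _] _] := hc.
have hm : coverp ((A ++ B) :: rest).
  apply: (cover_merge hc).
    apply: chainp_cat => // v vA vB; exact: cover_disj hc vA vB.
  move=> v; rewrite mem_cat.
  case vA: (v \in A); case vB: (v \in B) => //=.
  by case: (cover_disj hc vA vB).
have := min_cover_le hminP hm; rewrite -hs /=.
by rewrite ltnn.
Qed.

Lemma split_cov Q r1 z r2 rest : mincov (Q :: (r1 ++ z :: r2) :: rest) ->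
  e (last x0 Q) z -> r2 != [::] ->
  mincov (r2 :: (r1 ++ z :: rev Q) :: rest).
Proof.
move=> [hc hs] eqz r2ne; split; last by rewrite -hs.
have [/= /and3P[cQ cR _] _] := hc.
have [_ sR uR] := and3P cR.
have dj : forall v, v \in Q -> v \in r1 ++ z :: r2 -> False by move=> v; exact: cover_disj hc.
apply: (cover_repl2 hc).
- apply/and3P; split => //.
    by move/sorted_catr: sR => /path_sorted.
  by move: uR; rewrite cat_uniq => /and3P[_ _ /andP[]].
- rewrite -cat_rcons; apply: chainp_cat; last first.
  + move=> v; rewrite mem_rev => vR vQ; apply: (dj v vQ).
    by move: vR; rewrite mem_rcons mem_cat !inE => /orP[->|->]; rewrite ?orbT.
  + by rewrite last_rcons head_rev esymm.
  + exact: chainp_rev.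
  + apply/and3P; split.
    * by case: (r1).
    * by move: sR; rewrite -cat_rcons => /sorted_catl.
    * by move: uR; rewrite -cat_rcons cat_uniq => /andP[].
- move=> v; rewrite !mem_cat !inE mem_rev.
  have u1 : (v \in r1) -> (v == z) || (v \in r2) -> False.
    move=> h1 /orP[/eqP vz|h2]; move: uR; rewrite cat_uniq => /and3P[_ /hasP hn _].
      by apply: hn; exists z; rewrite ?inE ?eqxx // -vz.
    by apply: hn; exists v; rewrite // inE h2 orbT.
  have u2 : (v == z) -> (v \in r2) -> False.
    move=> /eqP -> h2; move: uR; rewrite cat_uniq => /and3P[_ _ /andP[hn _]].
    by rewrite h2 in hn.
  have u3 : (v \in Q) -> (v \in r1) || (v == z) || (v \in r2) -> False.
    move=> vQ h; apply: (dj v vQ); by rewrite mem_cat inE orbA.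
  case a: (v \in Q); case b: (v \in r1); case c: (v == z); case d: (v \in r2) => //=;
  by exfalso; first [ apply: u1; by rewrite ?a ?b ?c ?d ?orbT | apply: u2; by rewrite ?a ?b ?c ?d | apply: u3; by rewrite ?a ?b ?c ?d ?orbT ].
Qed.


Lemma split_at (z : V) s : z \in s -> s = take (index z s) s ++ z :: drop (index z s).+1 s.
Proof.
move=> zs; rewrite -{1}(cat_take_drop (index z s) s) (drop_nth z) ?index_mem //.
by rewrite nth_index.
Qed.

Lemma step_core cs Q z : mincov cs -> Q \in cs -> z \notin Q -> e (last x0 Q) z ->
  exists cs' r2, [/\ mincov cs', r2 \in cs', r2 != [::], e z (head x0 r2) &
    [/\ z \notin r2, head x0 r2 \notin Q & deg (head x0 r2) = deg (last x0 Q)]].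
Proof.
move=> hm hQ zQ eqz.
have [R hR zR] := cover_has z hm.1.
have RQ : R != Q by apply: contraNneq zQ => <-.
have [rest pe] := front2 hQ hR RQ.
have hm2 := mincov_perm pe hm.
have [/= /and3P[cQ cR _] _] := hm2.1.
have [Rne sR uR] := and3P cR.
have zh : z != head x0 R.
  apply/negP => /eqP zh; apply: (merge_contra hm2); by rewrite -zh.
have zl : z != last x0 R.
  apply/negP => /eqP zl; apply: (merge_contra (A := Q) (B := rev R) (rest := rest)).
    by case: hm2 => h1 h2; split => //; exact: cover_rev2.
  by rewrite head_rev -zl.
set r1 := take (index z R) R; set r2 := drop (index z R).+1 R.
have ER : R = r1 ++ z :: r2 by exact: split_at.
have r1ne : r1 != [::].
  by apply: contraNneq zh => h; rewrite ER h.
have r2ne : r2 != [::].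
  by apply: contraNneq zl => h; rewrite ER h /= last_cat.
have hm3 : mincov (Q :: (r1 ++ z :: r2) :: rest) by rewrite -ER.
have hm' := split_cov hm3 eqz r2ne.
have hmr : mincov (rev Q :: R :: rest).
  by case: hm2 => h1 h2; split => //; exact: cover_rev.
have hdeg := deg_eq hmr hm'.
exists (r2 :: (r1 ++ z :: rev Q) :: rest), r2; split => //.
- exact: mem_head.
- move: sR; rewrite ER; case: (r2) r2ne => // c t _; exact: sorted_mid.
split.
- by move: uR; rewrite ER cat_uniq => /and3P[_ _ /andP[]].
- apply/negP => hq; apply: (cover_disj hm2.1 hq).
  by rewrite ER mem_cat inE; case: (r2) r2ne => // c t _; rewrite /= inE eqxx !orbT.
- rewrite -head_rev; symmetry; apply: hdeg => /=.
  by rewrite ER; case: (r1) r1ne.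
Qed.

Lemma two_nbrs a y z : e a y -> e a z -> y != z -> 2 <= deg a.
Proof.
move=> ay az yz; rewrite /deg.
have h : #|[set y; z]| <= #|[set w | e a w]|.
  by apply: subset_leq_card; apply/subsetP => w; rewrite !inE => /orP[] /eqP ->.
by apply: leq_trans h; rewrite cards2 yz.
Qed.

Lemma other_nbr a y : 2 <= deg a -> exists z, e a z && (z != y).
Proof.
move=> h; case: (pickP [pred z | e a z && (z != y)]) => [z hz|hn]; first by exists z.
have : #|[set w | e a w]| <= #|[set y]|.
  apply: subset_leq_card; apply/subsetP => w; rewrite !inE => ew.
  by have := hn w; rewrite /= ew /= => /negbFE.
by rewrite cards1 leqNgt -/(deg a) h.
Qed.

Lemma nbr_out a t u : sorted e (a :: t) -> uniq (a :: t) -> 2 <= deg a ->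
  (t != [::] -> connect (avoid a) (head x0 t) u) ->
  exists z, [/\ e a z, z \notin a :: t & z != u].
Proof.
move=> srt uq hd hc.
case: t srt uq hc => [|b t] srt uq hc.
  have [z /andP[az zu]] := other_nbr u hd.
  by exists z; split => //; rewrite inE; apply: contraNneq (neq_of_e az) => ->.
have [z /andP[az zb]] := other_nbr b hd.
have ab : e a b by case/andP: srt.
have anot : a \notin b :: t by case/andP: uq.
have st : sorted e (b :: t) by exact: path_sorted srt.
have zin : z \notin a :: b :: t.
  rewrite inE negb_or eq_sym (neq_of_e az) /=; apply/negP => zt.
  apply: (tree_sep ab az); first by rewrite eq_sym.
  exact: chain_conn st anot (mem_head _ _) zt.
exists z; split => //; apply/negP => /eqP zu.
apply: (tree_sep ab az); first by rewrite eq_sym.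
by rewrite zu; apply: hc.
Qed.


Lemma head_last_neq (s : seq V) : uniq s -> 2 <= size s -> head x0 s != last x0 s.
Proof.
case: s => [|b [|c s]] //= /andP[bn _] _; apply: contraNneq bn => ->.
exact: mem_last.
Qed.

Lemma desc_deg n : forall cs Q u, #|br u (head x0 Q)| <= n -> mincov cs -> Q \in cs ->
  Q != [::] -> u \notin Q -> e u (head x0 Q) -> 2 <= deg (head x0 Q) -> False.
Proof.
elim: n => [|n IH] cs Q u hn hm hQ Qne uQ euq hdq.
  have : 0 < #|br u (head x0 Q)| by apply/card_gt0P; eexists; exact: br_self.
  by rewrite lt0n -leqn0 hn.
set q := head x0 Q.
have qQ : q \in Q by rewrite /q; case: (Q) Qne => // ? ? _; exact: mem_head.
have [rest pe] := front1 hQ.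
have hm1 := mincov_perm pe hm.
have hmr : mincov (rev Q :: rest) by case: hm1 => h1 h2; split => //; exact: cover_rev.
have dq : deg q = deg (last x0 Q) by rewrite -head_rev; exact: deg_eq hm1 hmr erefl.
have [/= /andP[cQ _] _] := hm1.1.
have [_ sQ uQQ] := and3P cQ.
have [a [t hrt]] : exists a t, rev Q = a :: t.
  by case: (rev Q) (chainp_rev cQ) => // a t _; exists a, t.
have ha : a = last x0 Q by rewrite -head_rev hrt.
have srt : sorted e (a :: t) by rewrite -hrt sorted_e_rev.
have urt : uniq (a :: t) by rewrite -hrt rev_uniq.
have memrt : forall v, (v \in a :: t) = (v \in Q) by move=> v; rewrite -hrt mem_rev.
have aQ : a \in Q by rewrite -memrt mem_head.
have ua : u != a by apply: contraNneq uQ => ->.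
have [z [az zt zu]] : exists z, [/\ e a z, z \notin a :: t & z != u].
  apply: nbr_out => //; first by rewrite ha -dq.
  move=> tne.
  have anot : a \notin t by case/andP: urt.
  have st : sorted e t by exact: path_sorted srt.
  have qt : q \in t.
    have := qQ; rewrite -memrt inE => /orP[/eqP qa|//].
    exfalso; have hsz : 2 <= size Q by rewrite -size_rev hrt /=; case: (t) tne.
    have := head_last_neq uQQ hsz; by rewrite -/q qa ha eqxx.
  have ht : head x0 t \in t by case: (t) tne => // ? ? _; exact: mem_head.
  apply: (@conn_step _ _ q); first exact: chain_conn st anot ht qt.
  - by rewrite esymm.
  - by apply: contraNneq anot => <-.
  - exact: ua.
have zQ : z \notin Q by rewrite -memrt.
have eaz : e (last x0 Q) z by rewrite -ha.
have [cs' [r2 [hm' hr2 r2ne ezc [zr2 cQ' hdc]]]] := step_core hm hQ zQ eaz.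
set c := head x0 r2 in ezc zr2 cQ' hdc.
have uz : u != z by rewrite eq_sym.
have qz : q != z by apply: contraNneq zQ => <-.
have ca : c != a by apply: contraNneq cQ' => ->.
have a0 : connect (avoid u) q a by apply: chain_conn sQ uQ qQ aQ.
have a1 : connect (avoid z) a q by apply: chain_conn sQ zQ aQ qQ.
have hd : u \notin br z c.
  apply/negP; rewrite inE => h.
  have : connect (avoid z) c a.
    apply: connect_trans (conn_step h euq uz qz) _.
    by rewrite avoid_csym.
  apply: (tree_sep ezc _ ca); by rewrite esymm.
have cu : c != u by apply: contraNneq hd => ->; exact: br_self.
have zin : z \in br u q by rewrite inE; apply: conn_step a0 az _ _; rewrite // eq_sym.
have hb : c \in br u q.
  rewrite inE; apply: (@conn_step _ _ z) => //; first by rewrite inE in zin.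
have hsub := br_sub hb hd.
have hlt : #|br z c| < #|br u q|.
  apply: card_lt_sub hsub zin _; apply: br_notin.
  by rewrite eq_sym; exact: neq_of_e ezc.
apply: (IH cs' r2 z) => //.
- by rewrite -ltnS; exact: leq_trans hlt hn.
- by rewrite hdc -dq.
Qed.


Lemma head_deg cs c : mincov cs -> c \in cs -> deg (head x0 c) <= 1.
Proof.
move=> hm hc; rewrite leqNgt; apply/negP => hd.
have [/andP[cne _] _] : chainp c /\ true by split => //; exact: (allP hm.1.1).
case: c hc cne hd => // a t hc _ hd.
have /and3P[_ srt uq] := allP hm.1.1 _ hc.
have [z [az zt _]] := @nbr_out a t (head x0 t) srt uq hd (fun _ => connect0 _ _).
have [rest pe] := front1 hc.
have hm1 := mincov_perm pe hm.
have hmr : mincov (rev (a :: t) :: rest) by case: hm1 => h1 h2; split => //; exact: cover_rev.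
have zr : z \notin rev (a :: t) by rewrite mem_rev.
have ez : e (last x0 (rev (a :: t))) z by rewrite last_rev.
have [cs' [r2 [hm' hr2 r2ne ezc [zr2 _ hdc]]]] := step_core hmr (mem_head _ _) zr ez.
apply: (desc_deg (leqnn _) hm' hr2 r2ne zr2 ezc).
by rewrite hdc last_rev.
Qed.

Lemma end_single Q r1 y r2 rest : mincov (Q :: (r1 ++ y :: r2) :: rest) ->
  e (last x0 Q) y -> r2 != [::] -> exists b, r2 = [:: b].
Proof.
move=> hm ey r2ne.
have hm' := split_cov hm ey r2ne.
have := head_deg hm' (mem_head _ _).
have [/= /and3P[_ cR _] _] := hm.1.
have [_ sR uR] := and3P cR.
clear cR.
case: r2 r2ne hm hm' sR uR => // b [|d t] _ hm hm' sR uR; first by exists b.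
move=> /= hd; exfalso.
have eyb : e y b by exact: sorted_mid sR.
have ebd : e b d by move: sR; rewrite -cat_rcons; exact: sorted_mid.
have yd : y != d.
  move: uR; rewrite cat_uniq => /and3P[_ _ /= /and3P[]].
  by rewrite !inE negb_or => /andP[_ /norP[]].
have eby : e b y by rewrite esymm.
have := two_nbrs eby ebd yd.
by rewrite leqNgt ltnS hd.
Qed.

Lemma main_aux x : [set x] \in P -> 1 < #|V| -> (forall a b, connect e a b) ->
  exists y : V, (forall z, e x z = (z == y)) /\
    exists2 R, R \in P &
      exists a b : V, [/\ R = [set a; y; b], uniq [:: a; y; b], e a y & e y b].
Proof.
move=> hx n2 hconn.
have [cs [hc hs hin]] := pc_to_cover hminP.1.
have hm : mincov cs by split.
have [C hC xC] := cover_has x hc.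
have hCP := hin C hC.
have eqC : [set v in C] = [set x].
  have [hpart _] := hminP.1; case/and3P: hpart => _ htriv _.
  apply/eqP/negPn/negP => ne; have := (trivIsetP htriv) _ _ hCP hx ne.
  by rewrite -setI_eq0 => /eqP/setP/(_ x); rewrite !inE xC eqxx.
have cC : chainp C by exact: (allP hc.1).
have Cx : C = [:: x] := chain_single cC eqC.
have dx : deg x <= 1 by have := head_deg hm hC; rewrite Cx.
have [v vx] : exists v, v != x.
  case: (pickP [pred v | v != x]) => [v h|hn]; first by exists v.
  have : #|[set: V]| <= #|[set x]|.
    apply: subset_leq_card; apply/subsetP => w _; rewrite inE.
    by have := hn w; rewrite /= => /negbFE.
  by rewrite cardsT cards1 leqNgt n2.
have [y exy] : exists y, e x y.
  have := hconn x v; case/connectP => p pth lst.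
  case: p pth lst => [|y p] /=; first by move=> _ vx'; rewrite vx' eqxx in vx.
  by case/andP => exy _; exists y.
have hN : forall z, e x z = (z == y).
  move=> z; apply/idP/eqP => [exz|->//]; apply/eqP/negPn/negP => zy.
  have := two_nbrs exy exz; rewrite eq_sym => /(_ zy).
  by rewrite leqNgt ltnS dx.
exists y; split => //.
have [R hR yR] := cover_has y hc.
have xy : x != y by exact: neq_of_e exy.
have RC : R != C by apply: contraTneq yR => ->; rewrite Cx inE eq_sym.
have [rest pe] := front2 hC hR RC.
have hm2 := mincov_perm pe hm; rewrite Cx in hm2.
have cR : chainp R by apply: (allP hm2.1.1); rewrite !inE eqxx orbT.
have [Rne sR uR] := and3P cR.
have yh : y != head x0 R.
  apply/negP => /eqP yh; apply: (merge_contra hm2); by rewrite /= -yh.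
have yl : y != last x0 R.
  apply/negP => /eqP yl; apply: (merge_contra (A := [:: x]) (B := rev R) (rest := rest)).
    by case: hm2 => h1 h2; split => //; exact: cover_rev2.
  by rewrite head_rev -yl.
set r1 := take (index y R) R; set r2 := drop (index y R).+1 R.
have ER : R = r1 ++ y :: r2 by exact: split_at.
have r1ne : r1 != [::] by apply: contraNneq yh => h; rewrite ER h.
have r2ne : r2 != [::] by apply: contraNneq yl => h; rewrite ER h /= last_cat.
have hm3 : mincov ([:: x] :: (r1 ++ y :: r2) :: rest) by rewrite -ER.
have [b Eb] := end_single hm3 exy r2ne.
have hrev : rev R = rev r2 ++ y :: rev r1 by rewrite ER rev_cat rev_cons cat_rcons.
have hm4 : mincov ([:: x] :: (rev r2 ++ y :: rev r1) :: rest).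
  by rewrite -hrev; case: hm2 => h1 h2; split => //; exact: cover_rev2.
have r1ne' : rev r1 != [::] by move: r1ne; case: (r1) => //= ? ?; rewrite rev_cons; case: rev.
have [a Ea] := end_single hm4 exy r1ne'.
have Ea' : r1 = [:: a] by rewrite -(revK r1) Ea.
have ER' : R = [:: a; y; b] by rewrite ER Ea' Eb.
exists [set w in R]; first exact: hin R hR.
exists a, b; rewrite ER' in sR uR; split => //.
- by apply/setP => w; rewrite ER' !inE orbA.
- by case/andP: sR.
- by move: sR => /= /andP[_ /andP[]].
Qed.

End Aux.

Unset Implicit Arguments.

Theorem lemma3p8 (V : finType) (e : rel V) :
  simple_graph e -> is_tree e -> iso_unique_zf e -> 1 < #|V| ->
  forall P : {set {set V}}, min_path_cover e P ->
  forall x : V, [set x] \in P ->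
  exists y : V, (forall z, e x z = (z == y)) /\
    exists2 R, R \in P &
      exists a b : V, [/\ R = [set a; y; b], uniq [:: a; y; b], e a y & e y b].
Proof.
move=> [es ei] [hconn hac] hiso n2 P hP x hx.
exact: (main_aux es ei hac x hP hiso hx n2 hconn).
Qed.
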